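(* Assume $K_1\subseteq K_2\subseteq\cdots\subseteq K_n\subseteq\mathbb F_q$ are subfields, $d_i=|K_i|$, $n\ge 2$. Let $\delta\ge 2$, $s\in\{1,\dots,n\}$ with $r:=d_s-\delta+1\ge 1$, and let $d=\sum_{i=1}^k(d_i-1)+\ell$ with $0\le k<n$ and $0<\ell\le d_{k+1}-1$. Assume that $n=k+1$ or $d_1\ge 3$. Assume that neither (i) [$k+2\le n$ and $d_{k+2}\le d_s$] nor (ii) [$d_s\le d_{k+1}$ and $0\le d_s-(d_{k+1}-\ell)<r$] holds, and that $d_s-(d_{k+1}-\ell)=r$. Then $$W^{(1)}(\mathcal D^{(\delta,s)}_{\mathcal X}(d))=\begin{cases} d_n-\ell+1 & \text{if } n=k+1,\\ (d_{k+1}-\ell+1)(d_{k+2}-1)\prod_{i=k+3}^n d_i & \text{if } n>k+1.\end{cases}$$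
   Context: $\mathcal X=K_1\times\cdots\times K_n=\{\boldsymbol\alpha_1,\dots,\boldsymbol\alpha_m\}$ (fixed enumeration), $m=\prod d_i$; $\Psi:\mathbb F_q[X_1,\dots,X_n]\to\mathbb F_q^m$, $f\mapsto(f(\boldsymbol\alpha_1),\dots,f(\boldsymbol\alpha_m))$. For $d\ge 0$, $\mathbb F_q[X_1,\dots,X_n]_{\le d}$ is the space of polynomials of degree at most $d$ together with $0$. $\mathcal P^{(\delta,s)}_d$ is the set of $f\in\mathbb F_q[X_1,\dots,X_n]_{\le d}$ with $\deg_{X_s}f<d_s-\delta+1$, together with $0$, and $\mathcal D^{(\delta,s)}_{\mathcal X}(d)=\Psi(\mathcal P^{(\delta,s)}_d)$. $W^{(1)}(C)$ is the minimum Hamming distance of a linear code $C$. Empty products equal $1$. *)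

(* Defs.v *)
From HB Require Import structures.
From mathcomp Require Import all_boot all_order all_algebra.
From mathcomp Require Import mpoly.
Set Implicit Arguments. Unset Strict Implicit. Unset Printing Implicit Defensive.
Import Order.TTheory GRing.Theory.
Local Open Scope ring_scope.

Definition is_subfield (F : fieldType) (S : {pred F}) : Prop :=
  [/\ 1 \in S,
      (forall x y, x \in S -> y \in S -> x - y \in S),
      (forall x y, x \in S -> y \in S -> x * y \in S) &
      (forall x, x \in S -> x != 0 -> x^-1 \in S)].

(* X = K_0 x ... x K_{n-1}  (0-based indices) *)
Definition gridX (F : finFieldType) (n : nat) (K : nat -> {set F})
  : {set {ffun 'I_n -> F}} :=
  [set x : {ffun 'I_n -> F} | [forall i : 'I_n, x i \in K i]].

(* total degree and degree in X_s of a multivariate polynomial (0 for p = 0) *)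
Definition totdeg (F : fieldType) (n : nat) (p : {mpoly F[n]}) : nat :=
  \max_(m <- msupp p) mdeg m.
Definition degX (F : fieldType) (n : nat) (s : 'I_n) (p : {mpoly F[n]}) : nat :=
  \max_(m <- msupp p) m s.

(* P_d^{(delta,s)} : polys of degree <= d with deg_{X_s} < d_s - delta + 1 = r,
   together with 0 *)
Definition Pspace (F : fieldType) (n : nat) (d : nat) (s : 'I_n) (r : nat)
  : {pred {mpoly F[n]}} :=
  [pred p | (p == 0) || ((totdeg p <= d)%N && (degX s p < r)%N)].

Definition Psi (F : finFieldType) (n : nat) (X : {set {ffun 'I_n -> F}})
  (p : {mpoly F[n]}) : 'rV[F]_#|X| :=
  \row_(j < #|X|) p.@[enum_val j].

Definition Dcode (F : finFieldType) (n : nat) (X : {set {ffun 'I_n -> F}})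
  (P : {pred {mpoly F[n]}}) (c : 'rV[F]_#|X|) : Prop :=
  exists2 p, p \in P & c = Psi X p.

Definition hwt (F : fieldType) (m : nat) (c : 'rV[F]_m) : nat :=
  #|[set j : 'I_m | c 0 j != 0]|.

(* W^(1)(C) = w : w is the minimum Hamming weight of a nonzero codeword of C
   (the minimum distance of the linear code C) *)
Definition W1_is (F : fieldType) (m : nat) (C : 'rV[F]_m -> Prop) (w : nat)
  : Prop :=
  ((exists c, [/\ C c, c != 0 & hwt c = w]) /\
   (forall c, C c -> c != 0 -> (w <= hwt c)%N))%type.

Arguments Psi {F n} X p.
Arguments Dcode {F n} X P c.
Arguments W1_is {F m} C w.

(* Main.v *)
Require Import Defs.
From HB Require Import structures.
From mathcomp Require Import all_boot all_order all_algebra.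
From mathcomp Require Import mpoly.
From mathcomp Require Import zify.
Import Order.TTheory GRing.Theory Num.Theory.

Module W1.
Set Implicit Arguments. Unset Strict Implicit. Unset Printing Implicit Defensive.
Local Open Scope ring_scope.

Section Uni.
Variables (F : fieldType) (n : nat).

Definition ext_m (m' : 'X_{1..n}) (j : nat) : 'X_{1..n.+1} :=
  [multinom (oapp (fun i' : 'I_n => m' i') j (insub (val i))) | i < n.+1].
Definition res_m (m : 'X_{1..n.+1}) : 'X_{1..n} :=
  [multinom m (widen_ord (leqnSn n) i) | i < n].

Lemma ext_m_widen m' j i : ext_m m' j (widen_ord (leqnSn n) i) = m' i.
Proof. by rewrite mnmE /= valK. Qed.

Lemma ext_m_max m' j : ext_m m' j ord_max = j.
Proof. by rewrite mnmE /= insubF //= ltnn. Qed.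

Lemma ext_res_eq (m : 'X_{1..n.+1}) m' j :
  ((j == m ord_max) && (res_m m == m')) = (m == ext_m m' j).
Proof.
apply/andP/eqP.
  case=> /eqP -> /eqP <-; apply/mnmP => i; rewrite mnmE.
  case: insubP => [i' _ vi|]; rewrite /=.
    by rewrite mnmE; congr (m _); apply/val_inj.
  rewrite -leqNgt => hi; congr (m _); apply/val_inj => /=.
  by apply/eqP; rewrite eqn_leq hi -ltnS ltn_ord.
move=> ->; rewrite ext_m_max eqxx; split => //.
by apply/eqP/mnmP => i; rewrite mnmE ext_m_widen.
Qed.

Lemma coef_muni (p : {mpoly F[n.+1]}) j m' :
  ((muni p)`_j)@_m' = p@_(ext_m m' j).
Proof.
rewrite muniE coef_sum raddf_sum /=.
transitivity (\sum_(m <- msupp p) p@_m * (m == ext_m m' j)%:R).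
  apply: eq_bigr => m _; rewrite coefZ coefXn.
  rewrite -ext_res_eq; case: (j == m ord_max); last by rewrite mulr0 mcoeff0 mulr0.
  by rewrite mulr1 mcoeffZ mcoeffX.
rewrite {3}(mpolyE p) raddf_sum /=; apply: eq_bigr => m _.
by rewrite mcoeffZ mcoeffX.
Qed.

End Uni.

End W1.
Import W1.

Module W2.
Set Implicit Arguments. Unset Strict Implicit. Unset Printing Implicit Defensive.
Local Open Scope ring_scope.

Section Ev.
Variables (F : finFieldType) (n : nat).

Definition ext_pt (x : {ffun 'I_n -> F}) (t : F) : {ffun 'I_n.+1 -> F} :=
  [ffun i : 'I_n.+1 => oapp (fun i' : 'I_n => x i') t (insub (val i))].

Lemma ext_pt_widen x t i : ext_pt x t (widen_ord (leqnSn n) i) = x i.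
Proof. by rewrite ffunE /= valK. Qed.

Lemma ext_pt_max x t : ext_pt x t ord_max = t.
Proof. by rewrite ffunE /= insubF //= ltnn. Qed.

Lemma ext_pt_cases (P : F -> Prop) (x : {ffun 'I_n -> F}) t :
  (forall i, P (x i)) -> P t -> forall i, P (ext_pt x t i).
Proof. by move=> Hx Ht i; rewrite ffunE; case: insubP => //=. Qed.

Lemma ext_pt_inj x t y u : ext_pt x t = ext_pt y u -> x = y /\ t = u.
Proof.
move=> e; split; last by rewrite -(ext_pt_max x t) -(ext_pt_max y u) e.
by apply/ffunP => i; rewrite -(ext_pt_widen x t) -(ext_pt_widen y u) e.
Qed.

Lemma meval_ext (p : {mpoly F[n.+1]}) x t :
  p.@[ext_pt x t] = (map_poly (meval x) (muni p)).[t].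
Proof.
rewrite muniE mevalE raddf_sum /= horner_sum; apply: eq_bigr => m _.
rewrite -mul_polyC rmorphM /= hornerM map_polyC hornerC map_polyXn hornerXn.
idtac.
rewrite -[X in _ = X * _]/(meval x _).
rewrite (mevalZ x) (mevalX x) big_ord_recr /= ext_pt_max mulrA; congr (_ * _ * _).
by apply: eq_bigr => i _; rewrite ext_pt_widen mnmE.
Qed.

End Ev.

End W2.
Import W2.

Module W3.
Set Implicit Arguments. Unset Strict Implicit. Unset Printing Implicit Defensive.
Local Open Scope ring_scope.

Section FP.
Variable F : finFieldType.

Lemma ext_pt_in n (A : 'I_n.+1 -> {set F}) (x : {ffun 'I_n -> F}) t :
  (forall i', x i' \in A (widen_ord (leqnSn n) i')) -> t \in A ord_max ->
  forall i, ext_pt x t i \in A i.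
Proof.
move=> Hx Ht i; rewrite ffunE; case: insubP => [i' _ vi|] /=.
  by have -> : i = widen_ord (leqnSn n) i' by apply/val_inj; rewrite /= vi.
rewrite -leqNgt => hi.
have -> : i = ord_max by apply/val_inj/eqP; rewrite /= eqn_leq hi -ltnS ltn_ord.
done.
Qed.

Definition nzset n (A : 'I_n -> {set F}) (p : {mpoly F[n]}) :=
  [set x : {ffun 'I_n -> F} | [forall i, x i \in A i] && (p.@[x] != 0)].

Lemma FP n (A : 'I_n -> {set F}) (p : {mpoly F[n]}) : p != 0 ->
  exists2 m, m \in msupp p & (\prod_(i < n) (#|A i| - m i) <= #|nzset A p|)%N.
Proof.
elim: n A p => [|n IH] A p p0.
  have c0 : p@_0%MM != 0.
    by apply: contra p0 => /eqP c0; rewrite (nvar0_mpolyC p) c0.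
  exists 0%MM; first by rewrite mcoeff_msupp.
  rewrite big_ord0 card_gt0; apply/set0Pn; exists [ffun i => 0].
  rewrite inE; apply/andP; split; first by apply/forallP => -[].
  by rewrite (nvar0_mpolyC p) mevalC.
set q := muni p.
have q0 : q != 0.
  have : msupp p != [::] by rewrite msupp_eq0.
  case Hs: (msupp p) => [|m0 s] // _.
  have m0in : m0 \in msupp p by rewrite Hs mem_head.
  apply/eqP => qe.
  have := coef_muni p (m0 ord_max) (res_m m0).
  rewrite -/q qe coef0 mcoeff0.
  have -> : ext_m (res_m m0) (m0 ord_max) = m0.
    by apply/esym/eqP; rewrite -ext_res_eq !eqxx.
  by move=> /esym/eqP; rewrite mcoeff_eq0 m0in.
set J := (size q).-1.
set g := q`_J.
have g0 : g != 0 by rewrite /g -lead_coefE lead_coef_eq0.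
have [m' m'in Hm'] := IH (fun i => A (widen_ord (leqnSn n) i)) g g0.
exists (ext_m m' J).
  by rewrite mcoeff_msupp -coef_muni -/q -/g -mcoeff_msupp.
rewrite big_ord_recr /= ext_m_max.
under eq_bigr => i _ do rewrite ext_m_widen.
set G' := nzset _ g in Hm'.
pose Fib (x : {ffun 'I_n -> F}) :=
  [set t in A ord_max | (map_poly (meval x) q).[t] != 0].
have C1 : forall x, x \in G' -> (#|A ord_max| - J <= #|Fib x|)%N.
  move=> x; rewrite inE => /andP[_ gx].
  set u := map_poly (meval x) q.
  have uJ : u`_J = g.@[x] by rewrite coef_map.
  have su : (size u <= J.+1)%N.
    rewrite size_map_poly_id0; first by rewrite /J prednK ?size_poly_gt0.
    by rewrite lead_coefE -/J -/g.
  have u0 : u != 0 by apply: contra gx => /eqP u0; rewrite -uJ u0 coef0.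
  set Z := A ord_max :&: [set t | root u t].
  have HZ : (#|Z| <= J)%N.
    rewrite -ltnS cardE; apply: leq_trans su.
    apply: max_poly_roots u0 _ (enum_uniq _).
    by apply/allP => t; rewrite mem_enum !inE => /andP[].
  have -> : Fib x = A ord_max :\: [set t | root u t].
    by apply/setP => t; rewrite !inE rootE andbC.
  rewrite -(cardsID [set t | root u t] (A ord_max)) -/Z.
  rewrite leq_subLR.
by rewrite leq_add2r.
have C2 : (\sum_(x in G') #|Fib x| <= #|nzset A p|)%N.
  pose S := [set xt : {ffun 'I_n -> F} * F | (xt.1 \in G') && (xt.2 \in Fib xt.1)].
  have -> : (\sum_(x in G') #|Fib x| = #|S|)%N.
    rewrite (eq_bigr (fun x => \sum_(t in Fib x) 1%N)) => [|x _]; last by rewrite sum1_card.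
    rewrite pair_big_dep /= -sum1_card; apply: eq_bigl => -[x t].
  by rewrite /S inE.
  rewrite -(card_imset _ (f := fun xt => ext_pt xt.1 xt.2)); last first.
    by move=> [x t] [y u] /= /ext_pt_inj [-> ->].
  apply: subset_leq_card; apply/subsetP => y /imsetP [[x t]].
  rewrite !inE /= => /andP[xG tF] ->.
  case/andP: xG => /forallP xA _; case/andP: tF => tA ut.
  rewrite meval_ext ut andbT; apply/forallP; exact: ext_pt_in.
apply: leq_trans C2.
apply: (@leq_trans (\sum_(x in G') (#|A ord_max| - J))); last by apply: leq_sum => x xG; exact: C1.
by rewrite sum_nat_const leq_mul2r Hm' orbT.
Qed.
End FP.

End W3.
Import W3.

Module W4.
Set Implicit Arguments. Unset Strict Implicit. Unset Printing Implicit Defensive.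
Local Open Scope ring_scope.

Section Red.
Variable F : finFieldType.

Lemma subfield0 (K : {set F}) : is_subfield (mem K) -> 0 \in K.
Proof. by case=> h1 hB _ _; have := hB 1 1 h1 h1; rewrite subrr. Qed.

Lemma subfield1 (K : {set F}) : is_subfield (mem K) -> 1 \in K.
Proof. by case. Qed.

Lemma subfield_card (K : {set F}) : is_subfield (mem K) -> (2 <= #|K|)%N.
Proof.
move=> hK; rewrite (cardsD1 0) subfield0 //= ltnS card_gt0.
by apply/set0Pn; exists 1; rewrite !inE oner_eq0 subfield1.
Qed.

Lemma subfield_pow1 (K : {set F}) x : is_subfield (mem K) -> x \in K -> x != 0 ->
  x ^+ (#|K| - 1) = 1.
Proof.
move=> hK xK x0.
have [_ _ hM _] := hK.
set K' := K :\ 0.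
have sub : forall y, y \in K' -> x * y \in K'.
  move=> y; rewrite !inE => /andP[y0 yK]; rewrite mulf_neq0 //=.
  exact: hM.
have inj : injective (fun y => x * y) := mulfI x0.
have eqK : [set x * y | y in K'] = K'.
  apply/eqP; rewrite eqEcard card_imset // leqnn andbT.
  by apply/subsetP => z /imsetP [y yK ->]; exact: sub.
have P0 : \prod_(y in K') y != 0.
  by apply/prodf_neq0 => y; rewrite !inE => /andP[].
have E : \prod_(y in K') y = \prod_(y in K') (x * y).
  by rewrite -{1}eqK big_imset //; move=> y z _ _; exact: inj.
move: E; rewrite big_split /= prodr_const.
have -> : #|K'| = (#|K| - 1)%N by rewrite [#|K|](cardsD1 0) subfield0 // add1n subSS subn0.
by rewrite -{1}[\prod_(y in K') y]mul1r => /mulIf -> //.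
Qed.

Definition red (d e : nat) : nat := if (e < d)%N then e else (e.-1 %% d.-1).+1.

Lemma red_le d e : (0 < d)%N -> (red d e <= e)%N.
Proof.
move=> d0; rewrite /red; case: (ltnP e d) => // h.
case: e h => [|e] h; last by rewrite /= ltnS leq_mod.
by case: d h d0.
Qed.

Lemma red_lt d e : (2 <= d)%N -> (red d e < d)%N.
Proof.
move=> d2; rewrite /red; case: (ltnP e d) => // _.
by case: d d2 => [|[|d]] //= _; rewrite ltnS ltn_mod.
Qed.

Lemma pow_red (K : {set F}) x e : is_subfield (mem K) -> x \in K ->
  x ^+ e = x ^+ red #|K| e.
Proof.
move=> hK xK; rewrite /red; case: (ltnP e #|K|) => // h.
have d2 := subfield_card hK.
have e0 : (0 < e)%N by apply: leq_trans h; apply: leq_trans d2.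
have [->|x0] := eqVneq x 0.
  by rewrite !expr0n; move: e0; case: e {h}.
rewrite -{1}(prednK e0) !exprS; congr (_ * _).
rewrite {1}(divn_eq e.-1 #|K|.-1) exprD mulnC exprM.
by rewrite -subn1 subfield_pow1 // expr1n mul1r subn1.
Qed.

Variable n : nat.
Variable dd : 'I_n -> nat.

Definition redm (m : 'X_{1..n}) : 'X_{1..n} := [multinom red (dd i) (m i) | i < n].
Definition redp (p : {mpoly F[n]}) : {mpoly F[n]} :=
  \sum_(m <- msupp p) p@_m *: 'X_[redm m].

Lemma redp_eval (p : {mpoly F[n]}) (x : 'I_n -> F) :
  (forall i e, x i ^+ e = x i ^+ red (dd i) e) -> (redp p).@[x] = p.@[x].
Proof.
move=> hx; rewrite [RHS]mevalE /redp raddf_sum /=; apply: eq_bigr => m _.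
rewrite -[X in X = _]/(meval x _) mevalZ mevalX; congr (_ * _).
by apply: eq_bigr => i _; rewrite mnmE -hx.
Qed.

Lemma redp_supp (p : {mpoly F[n]}) m2 : m2 \in msupp (redp p) ->
  exists2 m, m \in msupp p & m2 = redm m.
Proof.
move/msupp_sum_le/flattenP => [s /mapP [m mIn ->] m2In].
exists m; first by move: mIn; rewrite mem_filter.
by move/msuppZ_le: m2In; rewrite msuppX inE => /eqP.
Qed.

End Red.

End W4.
Import W4.

Module W8.
Set Implicit Arguments. Unset Strict Implicit. Unset Printing Implicit Defensive.
Local Open Scope ring_scope.

Section Constr.
Variables (F : finFieldType) (n : nat) (B : 'I_n -> {set F}) (a : 'I_n -> nat).
Hypothesis aB : forall i, (a i <= #|B i|)%N.

Definition Cs i : {set F} := [set x in take (a i) (enum (B i))].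
Definition Pc : {mpoly F[n]} := \prod_(i < n) \prod_(c in Cs i) ('X_i - c%:MP).

Lemma card_Cs i : #|Cs i| = a i.
Proof.
rewrite /Cs cardsE; move/card_uniqP: (take_uniq (a i) (enum_uniq (mem (B i)))) => ->.
by rewrite size_takel // -cardE.
Qed.

Lemma sub_Cs i : Cs i \subset B i.
Proof. by apply/subsetP => x; rewrite inE => /mem_take; rewrite mem_enum. Qed.

Lemma eval_Pc (x : 'I_n -> F) : Pc.@[x] = \prod_(i < n) \prod_(c in Cs i) (x i - c).
Proof.
rewrite /Pc rmorph_prod; apply: eq_bigr => i _; rewrite rmorph_prod.
by apply: eq_bigr => c _; rewrite -[LHS]/(meval x ('X_i - c%:MP)) mevalB mevalXU mevalC.
Qed.

Lemma cardXn (A : 'I_n -> {set F}) :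
  #|[set x : {ffun 'I_n -> F} | [forall i, x i \in A i]]| = (\prod_(i < n) #|A i|)%N.
Proof. by rewrite -cardsXn; congr #|pred_of_set _|; apply/setP => x; rewrite inE in_setXn. Qed.

Lemma nz_Pc : #|[set x : {ffun 'I_n -> F} | [forall i, x i \in B i] && (Pc.@[x] != 0)]|
  = (\prod_(i < n) (#|B i| - a i))%N.
Proof.
have -> : [set x : {ffun 'I_n -> F} | [forall i, x i \in B i] && (Pc.@[x] != 0)] =
  [set x : {ffun 'I_n -> F} | [forall i, x i \in B i :\: Cs i]].
  apply/setP => x; rewrite !inE eval_Pc prodf_seq_neq0.
  apply/andP/forallP => [[/forallP hB /allP hC] i|h].
    rewrite inE hB andbT; have := hC i (mem_index_enum _).
    rewrite prodf_seq_neq0 => /allP hc; apply/negP => xc.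
    by have := hc (x i) (mem_index_enum _); rewrite xc subrr eqxx.
  split; first by apply/forallP => i; have := h i; rewrite inE => /andP[].
  apply/allP => i _; rewrite prodf_seq_neq0; apply/allP => c _.
  apply/implyP => cC; rewrite subr_eq0; apply/eqP => xc.
  by have := h i; rewrite inE xc cC.
rewrite cardXn; apply: eq_bigr => i _.
by rewrite cardsD (setIidPr (sub_Cs i)) card_Cs.
Qed.


Lemma msupp_prod_le (I : Type) (r : seq I) (P : pred I) (G : I -> {mpoly F[n]})
  (Bd : I -> 'I_n -> nat) :
  (forall j, P j -> forall m, m \in msupp (G j) -> forall t, (m t <= Bd j t)%N) ->
  forall m, m \in msupp (\prod_(j <- r | P j) G j) ->
  forall t, (m t <= \sum_(j <- r | P j) Bd j t)%N.
Proof.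
move=> H; elim: r => [|j r IH] m.
  by rewrite !big_nil -mpolyC1 msupp1 inE => /eqP -> t; rewrite mnm0E.
rewrite big_cons; case Pj: (P j) => mP t; rewrite big_cons Pj; last exact: IH.
move/msuppM_le/allpairsP: mP => [[m1 m2] [/= h1 h2 ->]].
by rewrite mnmDE; apply: leq_add; [exact: H | exact: IH].
Qed.

Lemma supp_Pc m : m \in msupp Pc -> forall t, (m t <= a t)%N.
Proof.
move=> mP t.
have HH : forall i, xpredT i -> forall m', m' \in msupp (\prod_(c in Cs i) ('X_i - c%:MP)) ->
    forall t', (m' t' <= \sum_(c in Cs i) ((i == t') : nat))%N.
  move=> i _ m' m'P t'.
  apply: (@msupp_prod_le _ (index_enum F) (fun c => c \in Cs i)
    (fun c => 'X_i - c%:MP) (fun c t => ((i == t) : nat)%N)) => // c _ m2.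
  move/msuppB_le; rewrite mem_cat msuppX msuppC => /orP[|].
    by rewrite inE => /eqP -> t2; rewrite mnm1E.
  by case: (c == 0); rewrite ?inE // => /eqP -> t2; rewrite mnm0E.
apply: leq_trans (msupp_prod_le HH mP t) _.
rewrite (bigD1 t) //= eqxx sum_nat_const card_Cs muln1 big1 ?addn0 //.
by move=> i ne; apply: big1 => c _; rewrite (negbTE ne).
Qed.

End Constr.

End W8.
Import W8.

Module W5.
Set Implicit Arguments. Unset Strict Implicit. Unset Printing Implicit Defensive.

Section Comb.
Variables (d b : nat -> nat).

Lemma T1 (r : seq nat) m a :
  (forall i, i \in r -> b i <= d i /\ m <= d i) -> a <= m ->
  (a - \sum_(i <- r) (d i - b i)) * \prod_(i <- r) d i <= a * \prod_(i <- r) b i.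
Proof.
elim: r a => [|i r IH] a H am; first by rewrite !big_nil subn0.
rewrite !big_cons.
have [bi mi] := H i (mem_head _ _).
have H' : forall i', i' \in r -> b i' <= d i' /\ m <= d i'.
  by move=> i' i'r; apply: H; rewrite inE i'r orbT.
have := IH (a - (d i - b i)) H' (leq_trans (leq_subr _ _) am).
set S := \sum_(i <- r) _; set P := \prod_(i <- r) d _; set B := \prod_(i <- r) b _.
move=> IH'.
rewrite subnDA.
have h1 : d i * (a - (d i - b i)) <= a * b i by nia.
apply: (@leq_trans (d i * ((a - (d i - b i)) * B))).
  by rewrite mulnCA leq_mul2l IH' orbT.
by rewrite mulnA mulnA leq_mul2r h1 orbT.
Qed.

Definition srt := sorted (fun x y => d x <= d y).

Lemma srt_min j r : srt (j :: r) -> forall i, i \in r -> d j <= d i.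
Proof.
move=> hs i ir.
have := order_path_min (fun y x z (h1 : d x <= d y) h2 => leq_trans h1 h2) hs.
by move/allP/(_ i ir).
Qed.

Lemma GL0 (r2 : seq nat) j e :
  (forall i, i \in j :: r2 -> 0 < b i <= d i) ->
  srt (j :: r2) ->
  \sum_(i <- j :: r2) (d i - b i) <= e ->
  (d j - e) * \prod_(i <- r2) d i <= \prod_(i <- j :: r2) b i.
Proof.
move=> h2 hs hsum.
have hj := h2 j (mem_head _ _).
have := @T1 r2 (d j) (b j).
rewrite big_cons; set S := \sum_(i <- r2) _.
move=> T; apply: (@leq_trans ((b j - S) * \prod_(i <- r2) d i)).
  rewrite leq_mul2r; apply/orP; right.
  move: hsum; rewrite big_cons -/S; lia.
apply: T; last by case/andP: hj.
move=> i ir; split; last exact: srt_min hs i ir.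
by case/andP: (h2 i (@mem_behead _ (j :: r2) _ ir)).
Qed.

Lemma sum_rcons (r : seq nat) x (G : nat -> nat) :
  \sum_(i <- rcons r x) G i = \sum_(i <- r) G i + G x.
Proof. by rewrite -cats1 big_cat big_seq1. Qed.

Lemma prod_pos (r : seq nat) : (forall i, i \in r -> 0 < b i) -> 0 < \prod_(i <- r) b i.
Proof.
elim: r => [|i r IH] H; first by rewrite big_nil.
rewrite big_cons muln_gt0 H ?mem_head // IH // => i' i'r.
by apply: H; rewrite inE i'r orbT.
Qed.

Lemma GL N : forall (r1 r2 : seq nat) (j e : nat),
  size r1 + size r2 <= N ->
  (forall i, i \in r1 -> 0 < b i <= d i /\ d i <= d j) ->
  (forall i, i \in j :: r2 -> 0 < b i <= d i) ->
  srt (j :: r2) ->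
  e < d j ->
  \sum_(i <- r1 ++ j :: r2) (d i - b i) <= \sum_(i <- r1) (d i - 1) + e ->
  (d j - e) * \prod_(i <- r2) d i <= \prod_(i <- r1 ++ j :: r2) b i.
Proof.
elim: N => [|N IH] [|i0 r1] r2 j e hN h1 h2 hs he hsum.
- by apply: GL0 => //; move: hsum; rewrite big_nil.
- by [].
- by apply: GL0 => //; move: hsum; rewrite big_nil.
have [bi0 di0] := h1 i0 (mem_head _ _).
have h1' : forall i, i \in r1 -> 0 < b i <= d i /\ d i <= d j.
  by move=> i ir; apply: h1; rewrite inE ir orbT.
move: hsum; rewrite /= !big_cons.
set S := \sum_(i <- r1 ++ j :: r2) _; set S1 := \sum_(i <- r1) _ => hsum.
set w := b i0 - 1.
have hS : S <= S1 + (e + w) by lia.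
case: (ltnP (e + w) (d j)) => hew.
  have hN' : size r1 + size r2 <= N by move: hN => /=; lia.
  have IH' := IH r1 r2 j (e + w) hN' h1' h2 hs hew hS.
  apply: (@leq_trans (b i0 * ((d j - (e + w)) * \prod_(i <- r2) d i))).
    rewrite mulnA leq_mul2r; apply/orP; right; nia.
  by rewrite leq_mul2l IH' orbT.
rewrite {}/S in hS hsum.
case: r2 h2 hs hS hsum hN => [|j1 r2'] h2 hs hS hsum hN.
  rewrite big_nil muln1; apply: (@leq_trans (b i0 * 1)); first by rewrite muln1; lia.
  rewrite leq_mul2l prod_pos ?orbT // => i; rewrite mem_cat => /orP[ir|ij].
    by case/andP: (h1' i ir).1.
  by case/andP: (h2 i ij).
have hs' : srt (j1 :: r2') := path_sorted hs.
have dj1 : d j <= d j1 := srt_min hs (mem_head _ _).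
set e' := e + w + 1 - d j.
have h1'' : forall i, i \in rcons r1 j -> 0 < b i <= d i /\ d i <= d j1.
  move=> i; rewrite mem_rcons inE => /orP[/eqP ->|ir].
    by split => //; apply: h2; rewrite mem_head.
  by have [? ?] := h1' i ir; split => //; apply: leq_trans dj1.
have h2'' : forall i, i \in j1 :: r2' -> 0 < b i <= d i.
  by move=> i ir; apply: h2; rewrite inE ir orbT.
have he' : e' < d j1 by rewrite /e'; lia.
have hS' : \sum_(i <- rcons r1 j ++ j1 :: r2') (d i - b i) <=
           \sum_(i <- rcons r1 j) (d i - 1) + e'.
  rewrite cat_rcons sum_rcons -/S1; rewrite /e'; lia.
have hN' : size (rcons r1 j) + size r2' <= N by move: hN; rewrite size_rcons /=; lia.
have := IH (rcons r1 j) r2' j1 e' hN' h1'' h2'' hs' he' hS'.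
rewrite cat_rcons => IH'.
rewrite big_cons; apply: (@leq_trans (b i0 * ((d j1 - e') * \prod_(i <- r2') d i))).
  rewrite !mulnA leq_mul2r; apply/orP; right; rewrite /e'.
  have hw : w <= d j - 1 by rewrite /w; lia.
  nia.
by rewrite leq_mul2l IH' orbT.
Qed.
End Comb.

End W5.
Import W5.

Module W6.
Set Implicit Arguments. Unset Strict Implicit. Unset Printing Implicit Defensive.

Section CLB.
Variables (d A : nat -> nat).

Lemma srt_iota n m len : (forall i j, i <= j < n -> d i <= d j) -> m + len <= n ->
  srt d (iota m len).
Proof.
move=> mono; elim: len m => [|len IH] m hml //=.
case: len IH hml => [|len] IH hml //=.
rewrite -/(srt d (m.+1 :: iota m.+2 len)) -/(iota m.+1 len.+1).
have := IH m.+1; rewrite /srt /= => ->; last by lia.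
by rewrite mono //; lia.
Qed.

Lemma perm_split n k s : k < n -> s <= k ->
  perm_eq (iota 0 n) (s :: ([seq i <- iota 0 k.+1 | i != s] ++ k.+1 :: iota k.+2 (n - k.+2)) ++ [::]) 
  \/ True.
Proof. by right. Qed.

Lemma perm_iota n k s : k.+1 < n -> s <= k ->
  perm_eq (iota 0 n) (s :: ([seq i <- iota 0 k.+1 | i != s] ++ k.+1 :: iota k.+2 (n - k.+2))).
Proof.
move=> kn sk.
have -> : iota 0 n = iota 0 k.+1 ++ k.+1 :: iota k.+2 (n - k.+2).
  by rewrite {1}(_ : n = k.+1 + (n - k.+2).+1) ?iotaD //; lia.
rewrite -cat_cons; apply: perm_cat (perm_refl _).
have sin : s \in iota 0 k.+1 by rewrite mem_iota; lia.
apply: perm_trans (perm_to_rem sin) _.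
by rewrite rem_filter ?iota_uniq.
Qed.


Lemma CombLB n k s ell r :
  (forall i, i < n -> 2 <= d i) ->
  (forall i j, i <= j < n -> d i <= d j) ->
  (forall i, i < n -> A i < d i) ->
  \sum_(i <- iota 0 n) A i <= \sum_(i <- iota 0 k) (d i - 1) + ell ->
  A s < r -> r <= d s - 1 ->
  ell + d s = d k + r ->
  k < n -> s <= k ->
  (k.+1 < n -> d s < d k.+1) ->
  (if n == k.+1 then d k - ell + 1
   else (d k - ell + 1) * (d k.+1 - 1) * \prod_(i <- iota k.+2 (n - k.+2)) d i)
  <= \prod_(i <- iota 0 n) (d i - A i).
Proof.
move=> d2 mono Ad hsum Asr rds hell kn sk hks.
have sn : s < n by lia.
case: eqP => [nk|nk].
  rewrite (bigD1_seq s) ?iota_uniq ?mem_iota //=.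
  have P : 0 < \prod_(i <- iota 0 n | i != s) (d i - A i).
    rewrite big_seq_cond prodn_cond_gt0 // => i /andP[].
    by rewrite mem_iota subn_gt0 => /andP[_ hi] _; apply: Ad; lia.
  apply: leq_trans (leq_pmulr _ P); lia.
have kn1 : k.+1 < n by lia.
set r1 := [seq i <- iota 0 k.+1 | i != s]; set r2 := iota k.+2 (n - k.+2).
have pe := perm_iota kn1 sk.
have pe1 : perm_eq (iota 0 k.+1) (s :: r1).
  have sin : s \in iota 0 k.+1 by rewrite mem_iota; lia.
  by apply: perm_trans (perm_to_rem sin) _; rewrite rem_filter ?iota_uniq.
have sumS : forall G : nat -> nat, \sum_(i <- iota 0 k.+1) G i = \sum_(i <- iota 0 k) G i + G k.
  by move=> G; rewrite -addn1 iotaD big_cat big_seq1.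
have hr1 : forall i, i \in r1 -> i <= k /\ i != s.
  by move=> i; rewrite mem_filter mem_iota => /andP[-> /andP[_ h]]; split => //; lia.
have hr2 : forall i, i \in k.+1 :: r2 -> k.+1 <= i < n.
  by move=> i; rewrite inE mem_iota => /orP[/eqP ->|]; lia.
have hall : forall i, i \in r1 ++ k.+1 :: r2 -> i < n.
  move=> i; rewrite mem_cat => /orP[/hr1|/hr2]; lia.
rewrite (perm_big _ pe) big_cons.
move: hsum; rewrite (perm_big _ pe) big_cons => hsum.
have hd1 := sumS (fun i => d i - 1); rewrite (perm_big _ pe1) big_cons /= in hd1.
set b := fun i => d i - A i.
have hdb : \sum_(i <- r1 ++ k.+1 :: r2) (d i - b i) = \sum_(i <- r1 ++ k.+1 :: r2) A i.
  rewrite big_seq [RHS]big_seq; apply: eq_bigr => i /hall hi.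
  by rewrite /b subKn // ltnW // Ad.
set t := r - 1 - A s.
have GLres := @GL d b (size r1 + size r2) r1 r2 k.+1 t.+1 (leqnn _).
have dsk : d s <= d k by apply: mono; lia.
have dks : d s < d k.+1 := hks kn1.
have h1 : forall i, i \in r1 -> 0 < b i <= d i /\ d i <= d k.+1.
  move=> i /hr1 [ik _]; rewrite /b subn_gt0 leq_subr Ad; last by lia.
  by split => //; apply: mono; lia.
have h2 : forall i, i \in k.+1 :: r2 -> 0 < b i <= d i.
  by move=> i /hr2 hi; rewrite /b subn_gt0 leq_subr Ad //; lia.
have hs : srt d (k.+1 :: r2).
  have : srt d (iota k.+1 (n - k.+2).+1) by apply: srt_iota mono _; lia.
  by [].
have ds2 := d2 s sn; have dk2 := d2 k kn.
have he : t.+1 < d k.+1 by rewrite /t; lia.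
have hsum' : \sum_(i <- r1 ++ k.+1 :: r2) (d i - b i) <= \sum_(i <- r1) (d i - 1) + t.+1.
  have hsum2 : A s + \sum_(j <- r1 ++ k.+1 :: r2) A j <= \sum_(i <- iota 0 k) (d i - 1) + ell := hsum.
  rewrite hdb /t; move: hsum2 hd1.
  set X := \sum_(j <- r1 ++ k.+1 :: r2) A j; set S1 := \sum_(j <- r1) (d j - 1); set Sk := \sum_(i <- iota 0 k) (d i - 1).
  move=> hh1 hh2; lia.
have G := GLres h1 h2 hs he hsum'.
apply: (@leq_trans (b s * ((d k.+1 - t.+1) * \prod_(i <- r2) d i))); last first.
  by rewrite leq_mul2l G orbT.
rewrite mulnA leq_mul2r; apply/orP; right; rewrite /b /t.
have Asd : A s < d s by apply: Ad.
nia.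
Qed.

End CLB.

End W6.
Import W6.

Module W7.
Set Implicit Arguments. Unset Strict Implicit. Unset Printing Implicit Defensive.

Section CUB.
Variables (d : nat -> nat) (n k s ell r : nat).

Definition Ab i := if i == s then r - 1 else if i <= k then d i - 1
  else if i == k.+1 then 1 else 0.

Hypotheses (d2 : forall i, i < n -> 2 <= d i)
  (r1 : 1 <= r) (rds : r <= d s - 1) (hell : ell + d s = d k + r)
  (kn : k < n) (sk : s <= k).

Let pe1 : perm_eq (iota 0 k.+1) (s :: [seq i <- iota 0 k.+1 | i != s]).
Proof.
have sin : s \in iota 0 k.+1 by rewrite mem_iota; lia.
by apply: perm_trans (perm_to_rem sin) _; rewrite rem_filter ?iota_uniq.
Qed.

Let split_n : iota 0 n = iota 0 k.+1 ++ iota k.+1 (n - k.+1).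
Proof. by rewrite {1}(_ : n = k.+1 + (n - k.+1)) ?iotaD //; lia. Qed.

Lemma Ab_le i : i < n -> Ab i <= d i.
Proof.
move=> hi; have := d2 hi; rewrite /Ab.
case: eqP => [->|_]; first by lia.
case: ifP => _; first by lia.
by case: eqP => _; lia.
Qed.

Lemma CombUB_prod :
  \prod_(i <- iota 0 n) (d i - Ab i) =
  (if n == k.+1 then d k - ell + 1
   else (d k - ell + 1) * (d k.+1 - 1) * \prod_(i <- iota k.+2 (n - k.+2)) d i).
Proof.
have ds2 : 2 <= d s by apply: d2; lia.
rewrite split_n big_cat (perm_big _ pe1) big_cons.
rewrite big1_seq; last first.
  move=> i /andP[_]; rewrite mem_filter mem_iota => /andP[his /andP[_ hik]].
  have hi : i < n by lia.
  have := d2 hi; have ik : i <= k by lia.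
  by rewrite /Ab (negbTE his) ik; lia.
have -> : d s - Ab s = d k - ell + 1 by rewrite /Ab eqxx; lia.
rewrite -[LHS]/((d k - ell + 1) * 1 * \prod_(i <- iota k.+1 (n - k.+1)) (d i - Ab i)).
rewrite muln1.
case: eqP => [->|nk]; first by rewrite subnn big_nil muln1.
have kn1 : k.+1 < n by lia.
rewrite (_ : n - k.+1 = (n - k.+2).+1); last by lia.
rewrite /= big_cons /Ab (_ : (k.+1 == s) = false); last by apply/eqP; lia.
rewrite ltnn eqxx mulnA; congr (_ * _).
rewrite big_seq [RHS]big_seq; apply: eq_bigr => i; rewrite mem_iota => hi.
rewrite (_ : (i == s) = false); last by apply/eqP; lia.
rewrite (_ : (i <= k) = false); last by lia.
by rewrite (_ : (i == k.+1) = false) ?subn0 //; apply/eqP; lia.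
Qed.

Lemma CombUB_sum :
  \sum_(i <- iota 0 n) Ab i <= \sum_(i <- iota 0 k) (d i - 1) + ell.
Proof.
have ds2 : 2 <= d s by apply: d2; lia.
have dk2 : 2 <= d k by apply: d2; lia.
have sumS : \sum_(i <- iota 0 k.+1) (d i - 1) = \sum_(i <- iota 0 k) (d i - 1) + (d k - 1).
  by rewrite -addn1 iotaD big_cat big_seq1.
rewrite (perm_big _ pe1) big_cons in sumS.
rewrite split_n big_cat (perm_big _ pe1) big_cons.
have -> : \sum_(j <- [seq i <- iota 0 k.+1 | i != s]) Ab j =
          \sum_(j <- [seq i <- iota 0 k.+1 | i != s]) (d j - 1).
  rewrite big_seq [RHS]big_seq; apply: eq_bigr => i.
  rewrite mem_filter mem_iota => /andP[his /andP[_ hik]].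
  by rewrite /Ab (negbTE his) (_ : i <= k) //; lia.
have hT : \sum_(i <- iota k.+1 (n - k.+1)) Ab i <= 1.
  case: (n - k.+1) => [|m]; first by rewrite big_nil.
  rewrite /= big_cons /Ab (_ : (k.+1 == s) = false); last by apply/eqP; lia.
  rewrite ltnn eqxx big1_seq ?addn0 // => i /andP[_]; rewrite mem_iota => hi.
  rewrite (_ : (i == s) = false); last by apply/eqP; lia.
  rewrite (_ : (i <= k) = false); last by lia.
  by rewrite (_ : (i == k.+1) = false) //; apply/eqP; lia.
have As : Ab s = r - 1 by rewrite /Ab eqxx.
have sumS' : d s - 1 + \sum_(j <- [seq i <- iota 0 k.+1 | i != s]) (d j - 1) =
  \sum_(i <- iota 0 k) (d i - 1) + (d k - 1) := sumS.
rewrite -[X in X <= _]/(Ab s + \sum_(j <- [seq i <- iota 0 k.+1 | i != s]) (d j - 1) + \sum_(i <- iota k.+1 (n - k.+1)) Ab i).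
rewrite As; lia.
Qed.

End CUB.

End W7.
Import W7.

Module W9.
Set Implicit Arguments. Unset Strict Implicit. Unset Printing Implicit Defensive.

Section Aux.
Local Open Scope ring_scope.

Lemma hwt_Psi (F : finFieldType) n (X : {set {ffun 'I_n -> F}}) (p : {mpoly F[n]}) :
  hwt (Psi X p) = #|[set x in X | p.@[x] != 0]|.
Proof.
rewrite /hwt /Psi.
have -> : [set j : 'I_#|X| | (\row_(j < #|X|) p.@[enum_val j]) 0 j != 0] =
          [set j : 'I_#|X| | p.@[enum_val j] != 0] by apply/setP => j; rewrite !inE mxE.
rewrite -(card_imset _ (@enum_val_inj _ (mem X))); congr #|pred_of_set _|.
apply/setP => x; rewrite inE; apply/imsetP/andP => [[j]|[xX nz]].
  by rewrite inE => nz ->; rewrite enum_valP.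
by exists (enum_rank_in xX x); rewrite ?inE enum_rankK_in.
Qed.

Lemma hwt_gt0 (F : fieldType) m (c : 'rV[F]_m) : c != 0 -> (0 < hwt c)%N.
Proof.
move=> c0; rewrite /hwt card_gt0; apply/set0Pn.
case: (pickP (fun j : 'I_m => c 0 j != 0)) => [j hj|h]; first by exists j; rewrite inE.
case/eqP: c0; apply/rowP => j; rewrite mxE; apply/eqP; have := h j; by move/negbFE.
Qed.

Lemma sum_ord_iota n (G : nat -> nat) : (\sum_(i < n) G i = \sum_(i <- iota 0 n) G i)%N.
Proof. by rewrite -(big_mkord xpredT) /index_iota subn0. Qed.

Lemma prod_ord_iota n (G : nat -> nat) : (\prod_(i < n) G i = \prod_(i <- iota 0 n) G i)%N.
Proof. by rewrite -(big_mkord xpredT) /index_iota subn0. Qed.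

End Aux.


End W9.
Import W9.

Theorem mainTheorem11 (F : finFieldType) (n : nat) (K : nat -> {set F})
  (delta : nat) (s : 'I_n) (k ell : nat) :
  (2 <= n)%N ->
  (forall i, (i < n)%N -> is_subfield (mem (K i))) ->
  (forall i j, (i <= j < n)%N -> K i \subset K j) ->
  (2 <= delta)%N ->
  (1 <= #|K s| - delta + 1)%N ->
  (k < n)%N -> (0 < ell)%N -> (ell <= #|K k| - 1)%N ->
  (n = k.+1 \/ 3 <= #|K 0%N|)%N ->
  ~ ((k + 2 <= n)%N /\ (#|K k.+1| <= #|K s|)%N) ->
  ~ ((#|K s| <= #|K k|)%N /\
     (0 <= #|K s|%:Z - (#|K k|%:Z - ell%:Z) < (#|K s| - delta + 1)%N%:Z)%R) ->
  (#|K s|%:Z - (#|K k|%:Z - ell%:Z) = (#|K s| - delta + 1)%N%:Z)%R ->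
  W1_is
    (Dcode (gridX n K)
       (Pspace ((\sum_(i < k) (#|K i| - 1)) + ell)%N s (#|K s| - delta + 1)%N))
    (if n == k.+1 then (#|K k| - ell + 1)%N
     else ((#|K k| - ell + 1) * (#|K k.+1| - 1) * \prod_(k.+2 <= i < n) #|K i|)%N).
Proof.
move=> n2 hsub hmono del2 _ kn ell0 ellk _ noti _ hZ.
pose d := fun i => #|K i|.
pose r := (#|K s| - delta + 1)%N.
have dge2 : forall i, (i < n)%N -> (2 <= d i)%N.
  by move=> i hi; exact: subfield_card (hsub i hi).
have mono : forall i j, (i <= j < n)%N -> (d i <= d j)%N.
  by move=> i j h; exact: subset_leq_card (hmono i j h).
have ds2 := dge2 s (ltn_ord s).
have hell : (ell + d s = d k + r)%N.
  rewrite /d /r /=; move: hZ; set a := #|K s|; set b := #|K k|; move=> hZ; lia.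
have rds : (r <= d s - 1)%N by move: ds2; rewrite /r /d /=; lia.
have r1 : (1 <= r)%N by rewrite /r; lia.
have sk : (s <= k)%N.
  case: (ltnP k s) => // ks; exfalso; apply: noti; split; first by have := ltn_ord s; lia.
  by apply: mono; rewrite ks ltn_ord.
have hks : (k.+1 < n)%N -> (d s < d k.+1)%N.
  by move=> h; rewrite ltnNge; apply/negP => h'; apply: noti; split => //; lia.
have hD : ((\sum_(i < k) (#|K i| - 1)) + ell = \sum_(i <- iota 0 k) (d i - 1) + ell)%N.
  by rewrite (sum_ord_iota k (fun i => d i - 1)).
split.
  pose a := fun i : 'I_n => Ab d k s r i.
  have aB : forall i : 'I_n, (a i <= #|K i|)%N.
    by move=> i; exact: (Ab_le dge2 r1 rds hell kn sk (ltn_ord i)).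
  pose B := fun i : 'I_n => K i.
  pose P := Pc B a.
  have hwP : hwt (Psi (gridX n K) P) = (\prod_(i <- iota 0 n) (d i - Ab d k s r i))%N.
    rewrite hwt_Psi -(prod_ord_iota n (fun i => d i - Ab d k s r i)).
    rewrite -(nz_Pc aB); congr #|pred_of_set _|; apply/setP => x; rewrite !inE.
    by [].
  rewrite (CombUB_prod dge2 r1 rds hell kn sk) in hwP.
  exists (Psi (gridX n K) P); split.
  - exists P => //; rewrite inE; apply/orP; right; apply/andP; split.
      rewrite /totdeg; apply/bigmax_leqP_seq => m mP _.
      rewrite mdegE hD; apply: leq_trans (CombUB_sum dge2 r1 rds hell kn sk).
      rewrite -(sum_ord_iota n (Ab d k s r)); apply: leq_sum => i _.
      by have := supp_Pc aB mP i.
    rewrite /degX; apply: (@leq_ltn_trans (r - 1)); last by lia.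
    apply/bigmax_leqP_seq => m mP _.
    by apply: leq_trans (supp_Pc aB mP s) _; rewrite /a /Ab eqxx.
  - have Wpos : (0 < hwt (Psi (gridX n K) P))%N.
      rewrite hwP; case: eqP => nk; first by rewrite addn1.
      rewrite !muln_gt0 addn1 /=; apply/andP; split.
        by have := dge2 k.+1 (_ : k.+1 < n)%N; rewrite subn_gt0; apply; lia.
      rewrite big_seq_cond prodn_cond_gt0 // => i; rewrite mem_iota andbT => hi.
      by apply: leq_trans (dge2 i _); lia.
    apply/eqP => c0; move: Wpos; rewrite c0 /hwt card_gt0.
    by case/set0Pn => j; rewrite inE mxE eqxx.
  - exact: hwP.
move=> c [p pP ->] c0.
have p0 : p != 0%R.
  apply: contra c0 => /eqP ->; apply/eqP/rowP => j; rewrite !mxE.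
  by rewrite -[LHS]/(meval _ 0) meval0.
move: pP; rewrite inE (negbTE p0) /= => /andP[hdeg hdX].
pose dd := fun i : 'I_n => #|K i|.
pose pr := redp dd p.
have ev : forall x : {ffun 'I_n -> F}, [forall i, x i \in K i] -> pr.@[x] = p.@[x].
  move=> x /forallP hx; apply: redp_eval => i e.
  exact: pow_red (hsub i (ltn_ord i)) (hx i).
have hw : hwt (Psi (gridX n K) p) = #|nzset (fun i : 'I_n => K i) pr|.
  rewrite hwt_Psi; congr #|pred_of_set _|; apply/setP => x; rewrite !inE.
  by case hx: [forall i, x i \in K i] => //=; rewrite ev.
have pr0 : pr != 0%R.
  move: (hwt_gt0 c0); rewrite hw card_gt0 => /set0Pn [x]; rewrite inE => /andP[_].
  move=> nz; apply/eqP => e; move: nz; rewrite e.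
  by rewrite -[X in X != _]/(meval _ 0) meval0 eqxx.
have [m2 m2P hm2] := FP (fun i : 'I_n => K i) pr0.
have [m mP em] := redp_supp m2P.
rewrite hw; apply: leq_trans hm2.
pose Aa := fun i : nat => oapp (fun j : 'I_n => m2 j) 0%N (insub i).
have AaE : forall i : 'I_n, Aa i = m2 i by move=> i; rewrite /Aa valK.
have m2E : forall i : 'I_n, m2 i = red (dd i) (m i) by move=> i; rewrite em mnmE.
have m2m : forall i : 'I_n, (m2 i <= m i)%N.
  by move=> i; rewrite m2E; apply: red_le; apply: leq_trans (dge2 i (ltn_ord i)).
rewrite (eq_bigr (fun i : 'I_n => d i - Aa i)%N) => [|i _]; last by rewrite AaE.
rewrite (prod_ord_iota n (fun i => d i - Aa i)).
apply: (CombLB (d:=d) (A:=Aa) dge2 mono _ _ _ rds hell kn sk hks).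
- move=> i hi; rewrite /Aa insubT /= m2E; exact: red_lt (dge2 i hi).
- rewrite -(sum_ord_iota n Aa) -hD; apply: leq_trans hdeg.
  rewrite (eq_bigr (fun i : 'I_n => m2 i)) => [|i _]; last by rewrite AaE.
  apply: (@leq_trans (mdeg m)).
    by rewrite mdegE; apply: leq_sum => i _; exact: m2m.
  exact: leq_bigmax_seq.
- rewrite AaE; apply: leq_ltn_trans (m2m s) _; apply: leq_ltn_trans hdX.
  exact: leq_bigmax_seq.
Qed.
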